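(* Let $\mathcal{B}_0$ and $\mathcal{B}_1$ be $A_\infty$-operads with $\mathcal{B}_0$ cofibrant in the model structure on $\mathcal{OPER}$, and fix a morphism $f:\mathcal{B}_0\to\mathcal{B}_1$. For $a\in\mathbf{k}^\times$ let $a*f:\mathcal{B}_0\to\mathcal{B}_1$ be the morphism with $(a*f)_n=a^{n-1}f_n$ in arity $n$. Then the map $\mathbf{k}^\times\to[\mathcal{B}_0,\mathcal{B}_1]$, $a\mapsto[a*f]$, is a bijection, where $[\mathcal{B}_0,\mathcal{B}_1]$ denotes the set of (left or right) homotopy classes of morphisms $\mathcal{B}_0\to\mathcal{B}_1$.
   Context: $\mathbf{k}$ is a field; $\mathcal{OPER}$ is the category of non-$\Sigma$ operads in non-negatively graded chain complexes over $\mathbf{k}$, with the model structure in which weak equivalences are the arity-wise quasi-isomorphisms and fibrations are the morphisms that are surjective in every arity $n\ge0$ and every degree $k\ge1$ (every object is fibrant). An $A_\infty$-operad is an operad weakly equivalent (via a zigzag of arity-wise quasi-isomorphisms) to the associative operad $\mathcal{A}$. *)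

(* Defs.v *)
From HB Require Import structures.
From mathcomp Require Import all_boot all_order all_algebra.
Set Implicit Arguments. Unset Strict Implicit. Unset Printing Implicit Defensive.
Import Order.TTheory GRing.Theory Num.Theory.
Local Open Scope ring_scope.

Section DGOperads.
Variable K : fieldType.

(* Raw data of a dg non-Sigma operad: components O(n)_k (arity n : nat,
   homological degree k : int), differential d : O(n)_k -> O(n)_(k-1),
   partial compositions  x o_i y  (i is 0-indexed, meaningful for i < m),
   and the unit in O(1)_0. *)
Record dgop := DGOp {
  opc : nat -> int -> lmodType K;
  opd : forall n k, opc n k -> opc n (k - 1);
  opcomp : forall m p n q, nat -> opc m p -> opc n q -> opc (m + n)%N.-1 (p + q);
  opunit : opc 1 0
}.
Arguments opd _ {n k}.
Arguments opcomp _ {m p n q}.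

Definition ocast (O : dgop) m m' k k' (e1 : m = m') (e2 : k = k')
    (x : opc O m k) : opc O m' k' :=
  match e1 in _ = m1 return opc O m1 k' with
  | erefl => match e2 in _ = k1 return opc O m k1 with erefl => x end
  end.

Definition heq (O : dgop) m k m' k' (x : opc O m k) (y : opc O m' k') : Prop :=
  exists (e1 : m = m') (e2 : k = k'), ocast e1 e2 x = y.

Lemma degL (p q : int) : p - 1 + q = p + q - 1.
Proof. by rewrite addrAC. Qed.
Lemma degR (p q : int) : p + (q - 1) = p + q - 1.
Proof. by rewrite addrA. Qed.

(* the sign (-1)^p for a degree p (only used for p >= 0) *)
Definition sgn (p : int) : K := (-1) ^+ `|p|%N.

Definition is_operad (O : dgop) : Prop :=
  (forall n k (x : opc O n k), k < 0 -> x = 0) /\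
  (forall n k a (x y : opc O n k), opd O (a *: x + y) = a *: opd O x + opd O y) /\
  (forall n k (x : opc O n k), opd O (opd O x) = 0) /\
  (forall m p n q i a (x x' : opc O m p) (y : opc O n q), (i < m)%N ->
     opcomp O i (a *: x + x') y = a *: opcomp O i x y + opcomp O i x' y) /\
  (forall m p n q i a (x : opc O m p) (y y' : opc O n q), (i < m)%N ->
     opcomp O i x (a *: y + y') = a *: opcomp O i x y + opcomp O i x y') /\
  (forall m p n q i (x : opc O m p) (y : opc O n q), (i < m)%N ->
     opd O (opcomp O i x y) =
       ocast erefl (degL p q) (opcomp O i (opd O x) y)
       + sgn p *: ocast erefl (degR p q) (opcomp O i x (opd O y))) /\
  (forall l p m q n r i j (x : opc O l p) (y : opc O m q) (z : opc O n r),
     (i < l)%N -> (j < m)%N ->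
     heq (opcomp O (i + j)%N (opcomp O i x y) z) (opcomp O i x (opcomp O j y z))) /\
  (forall l p m q n r i k (x : opc O l p) (y : opc O m q) (z : opc O n r),
     (i < k)%N -> (k < l)%N ->
     heq (opcomp O (k + m)%N.-1 (opcomp O i x y) z)
         ((-1) ^+ (`|q| * `|r|)%N *: opcomp O i (opcomp O k x z) y)) /\
  (forall n q (y : opc O n q), heq (opcomp O 0%N (opunit O) y) y) /\
  (forall m p i (x : opc O m p), (i < m)%N -> heq (opcomp O i x (opunit O)) x).

Definition ohom (O P : dgop) := forall n k, opc O n k -> opc P n k.

Definition is_morphism (O P : dgop) (f : ohom O P) : Prop :=
  (forall n k a (x y : opc O n k), f n k (a *: x + y) = a *: f n k x + f n k y) /\
  (forall n k (x : opc O n k), f n (k - 1) (opd O x) = opd P (f n k x)) /\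
  (forall m p n q i (x : opc O m p) (y : opc O n q), (i < m)%N ->
     f _ _ (opcomp O i x y) = opcomp P i (f m p x) (f n q y)) /\
  f 1%N 0 (opunit O) = opunit P.

(* arity-wise quasi-isomorphism: the induced map on homology H_(k-1) is
   injective and surjective, for every arity n and every degree k *)
Definition quasi_iso (O P : dgop) (f : ohom O P) : Prop :=
  forall n k,
    (forall (z : opc O n (k - 1)) (w : opc P n k),
        opd O z = 0 -> f n (k - 1) z = opd P w ->
        exists u : opc O n k, z = opd O u) /\
    (forall z' : opc P n (k - 1), opd P z' = 0 ->
        exists (z : opc O n (k - 1)) (w : opc P n k),
          opd O z = 0 /\ f n (k - 1) z - z' = opd P w).

Definition fibration (O P : dgop) (f : ohom O P) : Prop :=
  forall n k, 1 <= k -> forall y : opc P n k, exists x, f n k x = y.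

(* cofibrant object: left lifting property of the initial map against all
   trivial fibrations, i.e. every morphism to the base of a trivial
   fibration lifts through it *)
Definition cofibrant (B : dgop) : Prop :=
  forall (X Y : dgop) (p : ohom X Y) (g : ohom B Y),
    is_operad X -> is_operad Y -> is_morphism p -> fibration p -> quasi_iso p ->
    is_morphism g ->
    exists h : ohom B X, is_morphism h /\
      forall n k (x : opc B n k), p n k (h n k x) = g n k x.

(* right homotopy through a path object B1 -> P -> B1 x B1
   (s a weak equivalence, (p0,p1) a fibration) *)
Definition homotopic (B0 B1 : dgop) (f g : ohom B0 B1) : Prop :=
  exists (P : dgop) (s : ohom B1 P) (p0 p1 : ohom P B1) (H : ohom B0 P),
    [/\ is_operad P, is_morphism s, is_morphism p0, is_morphism p1 & quasi_iso s] /\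
    (forall n k (x : opc B1 n k), p0 n k (s n k x) = x /\ p1 n k (s n k x) = x) /\
    (forall n k, 1 <= k -> forall y0 y1 : opc B1 n k,
        exists x, p0 n k x = y0 /\ p1 n k x = y1) /\
    is_morphism H /\
    (forall n k (x : opc B0 n k), p0 n k (H n k x) = f n k x /\ p1 n k (H n k x) = g n k x).

(* the associative operad: A(n) = K concentrated in degree 0, for all n >= 0,
   all compositions given by multiplication.  Component = 'rV_1 = K in degree 0
   and the zero space 'rV_0 otherwise. *)
Definition coefv (b : nat) (x : 'rV[K]_b) : K := \sum_(j < b) x 0 j.

Definition assoc_op : dgop :=
  @DGOp (fun _ k => 'rV[K]_(k == 0))
        (fun _ _ _ => 0)
        (fun _ _ _ _ _ x y => \row_j (coefv x * coefv y))
        (\row_j 1).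

Inductive zigzag : dgop -> dgop -> Prop :=
  | zz_refl O : zigzag O O
  | zz_fwd O P (f : ohom O P) : is_operad O -> is_operad P -> is_morphism f ->
      quasi_iso f -> zigzag O P
  | zz_bwd O P (f : ohom P O) : is_operad O -> is_operad P -> is_morphism f ->
      quasi_iso f -> zigzag O P
  | zz_trans O P Q : zigzag O P -> zigzag P Q -> zigzag O Q.

Definition A_infinity (B : dgop) : Prop := is_operad B /\ zigzag B assoc_op.

Definition oscale (O P : dgop) (a : K) (f : ohom O P) : ohom O P :=
  fun n k x => a ^ (n%:Z - 1) *: f n k x.

End DGOperads.

(* Main.v *)
From HB Require Import structures.
Require Import Defs.
From mathcomp Require Import all_boot all_order all_algebra.
From Stdlib Require Import ClassicalEpsilon.
From mathcomp Require Import zify.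
Import Order.TTheory GRing.Theory Num.Theory.
Local Open Scope ring_scope.
Set Implicit Arguments. Unset Strict Implicit. Unset Printing Implicit Defensive.

Section Basics.
Variable K : fieldType.

Lemma lin_facts (V W : lmodType K) (F : V -> W) :
  (forall a x y, F (a *: x + y) = a *: F x + F y) ->
  [/\ F 0 = 0, forall x y, F (x + y) = F x + F y,
      forall a x, F (a *: x) = a *: F x & forall x y, F (x - y) = F x - F y].
Proof.
move=> h.
have F0 : F 0 = 0.
  have := h 1 0 0; rewrite scaler0 addr0 scale1r.
  by move/(congr1 (fun t => t - F 0)); rewrite addrK subrr => ->.
have FD : forall x y, F (x + y) = F x + F y.
  by move=> x y; have := h 1 x y; rewrite !scale1r.
have FZ : forall a x, F (a *: x) = a *: F x.
  by move=> a x; have := h a x 0; rewrite !addr0 F0 addr0.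
split=> // x y; by rewrite FD -scaleN1r FZ scaleN1r.
Qed.

Lemma zid1 (V : zmodType) (a b c : V) : c - b = (a - b) - (a - c).
Proof. by rewrite opprB [RHS]addrC addrA subrK. Qed.
Lemma zid2 (V : zmodType) (a b c : V) : a - c = (a - b) + (b - c).
Proof. by rewrite addrA subrK. Qed.
Lemma zid3 (V : zmodType) (a b c : V) : a - c = (a - b) - (c - b).
Proof. by rewrite opprB addrA subrK. Qed.

Lemma ocast_id (O : dgop K) m k (e1 : m = m) (e2 : k = k) (x : opc O m k) : ocast e1 e2 x = x.
Proof. by rewrite (eq_irrelevance e1 erefl) (eq_irrelevance e2 erefl). Qed.

Definition bd (O : dgop K) n (y : opc O n 0) : Prop := exists w : opc O n 1, y = opd w.

Section Op.
Variable O : dgop K.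
Hypothesis hO : is_operad O.

Lemma op_neg n k (x : opc O n k) : k < 0 -> x = 0.
Proof. by case: hO => h _; apply: h. Qed.
Lemma d_lin n k : forall a (x y : opc O n k), opd (a *: x + y) = a *: opd x + opd y.
Proof. by case: hO => _ [h _]; apply: h. Qed.
Lemma d0 n k : opd (0 : opc O n k) = 0. Proof. by case: (lin_facts (@d_lin n k)). Qed.
Lemma dD n k (x y : opc O n k) : opd (x + y) = opd x + opd y. Proof. by case: (lin_facts (@d_lin n k)). Qed.
Lemma dZ n k a (x : opc O n k) : opd (a *: x) = a *: opd x. Proof. by case: (lin_facts (@d_lin n k)). Qed.
Lemma dB n k (x y : opc O n k) : opd (x - y) = opd x - opd y. Proof. by case: (lin_facts (@d_lin n k)). Qed.
Lemma dd n k (x : opc O n k) : opd (opd x) = 0. Proof. by case: hO => _ [_ [h _]]; apply: h. Qed.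
Lemma d_deg0 n (x : opc O n 0) : opd x = 0. Proof. exact: op_neg. Qed.

Lemma cl_lin m p n q i (y : opc O n q) : (i < m)%N -> forall a (x x' : opc O m p),
  opcomp i (a *: x + x') y = a *: opcomp i x y + opcomp i x' y.
Proof. by case: hO => _ [_ [_ [h _]]] hi a x x'; apply: h. Qed.
Lemma cr_lin m p n q i (x : opc O m p) : (i < m)%N -> forall a (y y' : opc O n q),
  opcomp i x (a *: y + y') = a *: opcomp i x y + opcomp i x y'.
Proof. by case: hO => _ [_ [_ [_ [h _]]]] hi a y y'; apply: h. Qed.
Lemma leib m p n q i (x : opc O m p) (y : opc O n q) : (i < m)%N ->
     opd (opcomp i x y) =
       ocast erefl (degL p q) (opcomp i (opd x) y)
       + sgn K p *: ocast erefl (degR p q) (opcomp i x (opd y)).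
Proof. by case: hO => _ [_ [_ [_ [_ [h _]]]]]; apply: h. Qed.

Lemma bd0 n : bd (0 : opc O n 0). Proof. by exists 0; rewrite d0. Qed.
Lemma bdD n (x y : opc O n 0) : bd x -> bd y -> bd (x + y).
Proof. by move=> [w ->] [w' ->]; exists (w + w'); rewrite dD. Qed.
Lemma bdZ n a (x : opc O n 0) : bd x -> bd (a *: x).
Proof. by move=> [w ->]; exists (a *: w); rewrite dZ. Qed.
Lemma bdN n (x : opc O n 0) : bd x -> bd (- x).
Proof. by move=> h; rewrite -scaleN1r; apply: bdZ. Qed.
Lemma bdB n (x y : opc O n 0) : bd x -> bd y -> bd (x - y).
Proof. by move=> hx hy; apply: bdD => //; apply: bdN. Qed.

Lemma c0r m n i (z : opc O m 1) : (i < m)%N -> opcomp i z (0 : opc O n (0 - 1)) = 0.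
Proof. by move=> hi; case: (lin_facts (fun a x1 x2 => @cr_lin m 1 n (0-1) i z hi a x1 x2)). Qed.
Lemma c0l m n i (z : opc O n 1) : (i < m)%N -> opcomp i (0 : opc O m (0 - 1)) z = 0.
Proof. by move=> hi; case: (lin_facts (fun a x1 x2 => @cl_lin m (0-1) n 1 i z hi a x1 x2)). Qed.

Lemma leib10 m n i (w : opc O m 1) (y : opc O n 0) : (i < m)%N ->
  (opd (opcomp i w y : opc O _ 1) : opc O _ 0) = opcomp i (opd w) y.
Proof.
move=> hi; have := leib w y hi; rewrite !ocast_id (d_deg0 y) c0r // scaler0 => ->; exact: addr0.
Qed.
Lemma leib01 m n i (x : opc O m 0) (w : opc O n 1) : (i < m)%N ->
  (opd (opcomp i x w : opc O _ 1) : opc O _ 0) = opcomp i x (opd w).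
Proof.
move=> hi; have := leib x w hi; rewrite !ocast_id (d_deg0 x) c0l // /sgn /= expr0 scale1r => ->; exact: add0r.
Qed.

Lemma comp_bd m n i (x x' : opc O m 0) (y y' : opc O n 0) : (i < m)%N ->
  bd (x - x') -> bd (y - y') -> bd (opcomp i x y - opcomp i x' y' : opc O _ 0).
Proof.
move=> hi [w hw] [w' hw'].
have L := @cl_lin m 0 n 0 i y hi; have R := @cr_lin m 0 n 0 i x' hi.
case: (lin_facts (fun a x1 x2 => L a x1 x2)) => _ _ _ LB.
case: (lin_facts (fun a x1 x2 => R a x1 x2)) => _ _ _ RB.
have -> : opcomp i x y - opcomp i x' y' =
   opcomp i (x - x') y + opcomp i x' (y - y') :> opc O _ 0.
  by rewrite LB RB addrA subrK.
rewrite hw hw'.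
exists (opcomp i w y + opcomp i x' w' : opc O _ 1).
by rewrite dD leib10 // leib01.
Qed.
End Op.

Section Mor.
Unset Implicit Arguments.
Variables (O P : dgop K) (f : ohom O P).
Set Implicit Arguments.
Hypothesis hf : is_morphism f.

Lemma mlin n k : forall a (x y : opc O n k), f n k (a *: x + y) = a *: f n k x + f n k y.
Proof. by case: hf => h _; apply: h. Qed.
Lemma m0 n k : f n k 0 = 0. Proof. by case: (lin_facts (@mlin n k)). Qed.
Lemma mD n k (x y : opc O n k) : f n k (x + y) = f n k x + f n k y. Proof. by case: (lin_facts (@mlin n k)). Qed.
Lemma mZ n k a (x : opc O n k) : f n k (a *: x) = a *: f n k x. Proof. by case: (lin_facts (@mlin n k)). Qed.
Lemma mB n k (x y : opc O n k) : f n k (x - y) = f n k x - f n k y. Proof. by case: (lin_facts (@mlin n k)). Qed.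
Lemma md n k (x : opc O n k) : f n (k - 1) (opd x) = opd (f n k x).
Proof. by case: hf => _ [h _]; apply: h. Qed.
Lemma mc m p n q i (x : opc O m p) (y : opc O n q) : (i < m)%N ->
  f _ _ (opcomp i x y) = opcomp i (f m p x) (f n q y).
Proof. by case: hf => _ [_ [h _]]; apply: h. Qed.
Lemma mc0 m n i (x : opc O m 0) (y : opc O n 0) : (i < m)%N ->
  f _ 0 (opcomp i x y : opc O _ 0) = opcomp i (f m 0 x) (f n 0 y).
Proof. move=> hi; exact: (mc x y hi). Qed.
Lemma mu : f 1 0 (opunit O) = opunit P. Proof. by case: hf => _ [_ [_ h]]. Qed.
Lemma mbd n (x : opc O n 0) : bd x -> bd (f n 0 x).
Proof. by move=> [w ->]; exists (f n 1 w); exact: (md w). Qed.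

Hypothesis hq : quasi_iso f.
Lemma qi_inj0 (hO : is_operad O) n (z : opc O n 0) : bd (f n 0 z) -> bd z.
Proof.
move=> [w hw]; case: (hq n 1) => h _.
by have [u hu] := h z w (d_deg0 hO z) hw; exists u.
Qed.
Lemma qi_surj0 (hP : is_operad P) n (y : opc P n 0) : exists z : opc O n 0, bd (f n 0 z - y).
Proof.
case: (hq n 1) => _ h; have [z [w [_ hw]]] := h y (d_deg0 hP y).
by exists z; exists w.
Qed.
End Mor.

Fixpoint M2 (O : dgop K) (m : opc O 2 0) (k : nat) : opc O k.+2 0 :=
  match k with 0 => m | k'.+1 => opcomp 0 m (M2 m k') end.
Definition Mseq (O : dgop K) (e : opc O 0 0) (m : opc O 2 0) (n : nat) : opc O n 0 :=
  match n return opc O n 0 with 0 => e | 1 => opunit O | k.+2 => M2 m k end.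

Definition acyc (O : dgop K) := forall n k, 2 <= k -> forall z : opc O n (k - 1),
  opd z = 0 -> exists u : opc O n k, z = opd u.

Definition Inv' (O : dgop K) (e : opc O 0 0) (m : opc O 2 0) : Prop :=
  [/\ acyc O, ~ bd (opunit O), bd (opcomp 0 m e - opunit O : opc O 1 0)
    & forall n (x : opc O n 0), exists lam, bd (x - lam *: Mseq e m n)].

Lemma mM (O P : dgop K) (f : ohom O P) (hf : is_morphism f) e m n :
  f n 0 (Mseq e m n) = Mseq (f 0 0 e) (f 2 0 m) n.
Proof.
case: n => [|[|k]] //=; first exact: mu.
elim: k => [|k IH] //=.
rewrite -IH; exact: (mc0 hf m (M2 m k) (isT : (0 < 2)%N)).
Qed.

Lemma inv_fwd (O P : dgop K) (f : ohom O P) (hO : is_operad O) (hP : is_operad P)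
  (hf : is_morphism f) (hq : quasi_iso f) e m :
  @Inv' O e m -> @Inv' P (f 0 0 e) (f 2 0 m).
Proof.
case=> AO BO CO DO; split.
- move=> n k hk z' hz'; case: (hq n k) => _ s.
  have [z [w [hz hzw]]] := s z' hz'.
  have [u hu] := AO n k hk z hz.
  exists (f n k u - w); rewrite (dB hP) -(md hf u) -hu -hzw.
  by rewrite subKr.
- move=> hb; apply: BO; apply: (qi_inj0 hq hO); by rewrite (mu hf).
- have := mbd hf CO; rewrite (mB hf) (mu hf).
  by rewrite (mc0 hf m e (isT : (0 < 2)%N)).
- move=> n y; have [z hz] := qi_surj0 hq hP y.
  have [lam hl] := DO n z; exists lam.
  rewrite -(mM hf).
  have -> : y - lam *: f n 0 (Mseq e m n) = f n 0 (z - lam *: Mseq e m n) - (f n 0 z - y).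
    by rewrite (mB hf) (mZ hf); exact: zid1.
  exact: (bdB hP (mbd hf hl) hz).
Qed.

Lemma inv_bwd (O P : dgop K) (f : ohom O P) (hO : is_operad O) (hP : is_operad P)
  (hf : is_morphism f) (hq : quasi_iso f) e' m' :
  @Inv' P e' m' -> exists e m, @Inv' O e m.
Proof.
case=> AP BP CP DP.
have [e he] := qi_surj0 hq hP e'.
have [m hm] := qi_surj0 hq hP m'.
have key : forall n, bd (f n 0 (Mseq e m n) - Mseq e' m' n).
  case=> [|[|k]] //=; first by rewrite (mu hf) subrr; apply: bd0.
  elim: k => [|k IH] //=.
  rewrite (mc0 hf m (M2 m k) (isT : (0 < 2)%N)).
  exact: (comp_bd hP (isT : (0 < 2)%N) hm IH).
exists e, m; split.
- move=> n k hk z hz.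
  have hfz : opd (f n (k - 1) z) = 0 by rewrite -(md hf) hz (m0 hf).
  have [u hu] := AP n k hk _ hfz.
  by case: (hq n k) => inj _; apply: (inj z u hz hu).
- by move=> hb; apply: BP; rewrite -(mu hf); apply: mbd.
- apply: (qi_inj0 hq hO).
  rewrite (mB hf) (mu hf) (mc0 hf m e (isT : (0 < 2)%N)).
  have -> : opcomp 0 (f 2 0 m) (f 0 0 e) - opunit P =
     (opcomp 0 (f 2 0 m) (f 0 0 e) - opcomp 0 m' e') + (opcomp 0 m' e' - opunit P) :> opc P 1 0.
    exact: zid2.
  apply: (bdD hP) => //; exact: (comp_bd hP (isT : (0 < 2)%N) hm he).
- move=> n x; have [lam hl] := DP n (f n 0 x); exists lam.
  apply: (qi_inj0 hq hO).
  have -> : f n 0 (x - lam *: Mseq e m n) =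
     (f n 0 x - lam *: Mseq e' m' n) - lam *: (f n 0 (Mseq e m n) - Mseq e' m' n).
    by rewrite (mB hf) (mZ hf) scalerBr; exact: zid3.
  exact: (bdB hP hl (bdZ hP _ (key n))).
Qed.

Lemma zz_inv (O P : dgop K) : zigzag O P ->
  (exists e m, @Inv' O e m) <-> (exists e m, @Inv' P e m).
Proof.
elim=> {O P} [O|O P f hO hP hf hq|O P f hO hP hf hq|O P Q _ IH1 _ IH2].
- by [].
- split; first by move=> [e [m h]]; exists (f 0 0 e), (f 2 0 m); exact: inv_fwd.
  by move=> [e [m h]]; exact: (inv_bwd hO hP hf hq h).
- split; last by move=> [e [m h]]; exists (f 0 0 e), (f 2 0 m); exact: inv_fwd.
  by move=> [e [m h]]; exact: (inv_bwd hP hO hf hq h).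
- by rewrite IH1 IH2.
Qed.
End Basics.

Section As.
Variable K : fieldType.

Lemma rv_false b (z : 'rV[K]_(nat_of_bool b)) : b = false -> z = 0.
Proof. by move=> hb; subst b; apply/rowP => -[]. Qed.

Definition r1 : 'rV[K]_1 := \row_j 1.
Lemma coefv_r1 : coefv r1 = 1.
Proof. by rewrite /coefv big_ord1 mxE. Qed.
Lemma coefv1 (x : 'rV[K]_1) : coefv x = x 0 0.
Proof. by rewrite /coefv big_ord1. Qed.

Lemma M2_as k : @M2 K (assoc_op K) r1 k = r1.
Proof.
elim: k => [|k IH] //=; rewrite IH.
apply/rowP => j; rewrite !mxE.
change (coefv r1 * coefv r1 = 1); by rewrite coefv_r1 mulr1.
Qed.

Lemma inv_assoc : @Inv' K (assoc_op K) r1 r1.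
Proof.
split.
- move=> n k hk z _; exists 0.
  apply: rv_false.
  by apply/eqP => /eqP; rewrite subr_eq0 => /eqP hk1; move: hk; rewrite hk1.
- move=> [w hw]; have := congr1 (fun v : 'rV[K]_1 => v 0 0) hw.
  by rewrite /= !mxE => /eqP; rewrite oner_eq0.
- exists 0; apply/rowP => j; rewrite !mxE.
  change (coefv r1 * coefv r1 - 1 = 0 :> K).
  by rewrite coefv_r1 mulr1 subrr.
- move=> n x; exists (x 0 0); exists 0.
  case: n x => [|[|k]] x /=; last rewrite M2_as;
  by apply/rowP => j; rewrite !mxE (ord1 j) mulr1 subrr.
Qed.
End As.
Definition asb (P : Prop) : bool := if excluded_middle_informative P then true else false.
Lemma asbP (P : Prop) : reflect P (asb P).
Proof. rewrite /asb; case: excluded_middle_informative => h; by constructor. Qed.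

Record subspec (K : pzRingType) (V : lmodType K) := SubSpec {
  sp :> V -> Prop; sp0 : sp 0;
  spD : forall a x y, sp x -> sp y -> sp (a *: x + y) }.

Record subm (K : pzRingType) (V : lmodType K) (S : subspec V) := SubM { smv : V; smP : asb (S smv) }.

HB.instance Definition _ K V S := [isSub for @smv K V S].
HB.instance Definition _ K V S := [Choice of @subm K V S by <:].
Lemma smv_inj K V S : injective (@smv K V S). Proof. exact: val_inj. Qed.

Section Z.
Lemma spA K (V : lmodType K) (S : subspec V) x y : S x -> S y -> S (x + y).
Proof. by move=> a b; have := spD 1 a b; rewrite scale1r. Qed.
Lemma spZ K (V : lmodType K) (S : subspec V) a x : S x -> S (a *: x).
Proof. by move=> h; have := spD a h (sp0 S); rewrite addr0. Qed.
Lemma spN K (V : lmodType K) (S : subspec V) x : S x -> S (- x).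
Proof. by move=> h; have := spZ (-1) h; rewrite scaleN1r. Qed.
End Z.

Definition sm0 K V S : @subm K V S := SubM (introT (asbP _) (sp0 S)).
Definition smadd K V S (x y : @subm K V S) : subm S :=
  SubM (introT (asbP _) (spA (elimT (asbP _) (smP x)) (elimT (asbP _) (smP y)))).
Definition smopp K V S (x : @subm K V S) : subm S :=
  SubM (introT (asbP _) (spN (elimT (asbP _) (smP x)))).
Definition smscale K V S a (x : @subm K V S) : subm S :=
  SubM (introT (asbP _) (spZ a (elimT (asbP _) (smP x)))).

Lemma smaddA K V S : associative (@smadd K V S).
Proof. by move=> x y z; apply: smv_inj; rewrite /= addrA. Qed.
Lemma smaddC K V S : commutative (@smadd K V S).
Proof. by move=> x y; apply: smv_inj; rewrite /= addrC. Qed.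
Lemma smadd0 K V S : left_id (@sm0 K V S) (@smadd K V S).
Proof. by move=> x; apply: smv_inj; rewrite /= add0r. Qed.
Lemma smaddN K V S : left_inverse (@sm0 K V S) (@smopp K V S) (@smadd K V S).
Proof. by move=> x; apply: smv_inj; rewrite /= addNr. Qed.

HB.instance Definition _ K V S := GRing.isZmodule.Build (@subm K V S)
  (@smaddA K V S) (@smaddC K V S) (@smadd0 K V S) (@smaddN K V S).

Lemma smsA K V S a b (x : @subm K V S) : smscale a (smscale b x) = smscale (a * b) x.
Proof. by apply: smv_inj; rewrite /= scalerA. Qed.
Lemma sms1 K V S : left_id 1 (@smscale K V S).
Proof. by move=> x; apply: smv_inj; rewrite /= scale1r. Qed.
Lemma smsDr K V S : right_distributive (@smscale K V S) +%R.
Proof. by move=> a x y; apply: smv_inj; rewrite /= scalerDr. Qed.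
Lemma smsDl K V S (v : @subm K V S) : forall a b : K, smscale (a + b) v = smscale a v + smscale b v.
Proof. by move=> a b; apply: smv_inj; rewrite /= scalerDl. Qed.

HB.instance Definition _ K V S := GRing.Zmodule_isLmodule.Build K (@subm K V S)
  (@smsA K V S) (@sms1 K V S) (@smsDr K V S) (@smsDl K V S).

Lemma smvD K V S (x y : @subm K V S) : smv (x + y) = smv x + smv y. Proof. by []. Qed.
Lemma smvZ K V S a (x : @subm K V S) : smv (a *: x) = a *: smv x. Proof. by []. Qed.
Lemma smv0 K V S : smv (0 : @subm K V S) = 0. Proof. by []. Qed.

Section Path.
Variable K : fieldType.
Variable B : dgop K.
Hypothesis hB : is_operad B.

Lemma ocast0 m m' k k' (e1 : m = m') (e2 : k = k') : ocast e1 e2 (0 : opc B m k) = 0.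
Proof. by case: m' / e1; case: k' / e2. Qed.

Lemma lmid (V : lmodType K) a (x1 x2 y1 y2 : V) :
  a *: x1 + y1 - (a *: x2 + y2) = a *: (x1 - x2) + (y1 - y2).
Proof. by rewrite scalerBr opprD addrACA. Qed.

Definition Qp n k (z : opc B n k * opc B n k) : Prop :=
  forall e : 1 - 1 = k, exists w : opc B n 1, z.1 - z.2 = ocast erefl e (opd w).

Lemma Qp0 n k : Qp (0 : opc B n k * opc B n k).
Proof. move=> e; exists 0; case: k / e; rewrite /= (d0 hB). exact: subrr. Qed.

Lemma QpD n k a (x y : opc B n k * opc B n k) : Qp x -> Qp y -> Qp (a *: x + y).
Proof.
move=> hx hy e; have [w hw] := hx e; have [w' hw'] := hy e.
exists (a *: w + w'); clear hx hy; move: hw hw'; case: k / e x y => x y /= hw hw'.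
by rewrite lmid hw hw' (d_lin hB).
Qed.

Definition Q n k : subspec (opc B n k * opc B n k)%type := SubSpec (@Qp0 n k) (@QpD n k).
Definition PT n k : lmodType K := subm (Q n k).

Lemma Qfree n k (z : opc B n k * opc B n k) : k != 0 -> Q n k z.
Proof. by move=> hk e; exfalso; move: hk; rewrite -e. Qed.

Lemma QdP n k (z : PT n k) : Q n (k - 1) (opd (smv z).1, opd (smv z).2).
Proof.
move=> e; have ek : 1 = k := addIr _ e.
subst k; exists ((smv z).1 - (smv z).2); by rewrite ocast_id (dB hB).
Qed.
Definition dP n k (z : PT n k) : PT n (k - 1) := SubM (introT (asbP _) (QdP z)).

Definition cpair m p n q i (x : PT m p) (y : PT n q) :=
  (opcomp i (smv x).1 (smv y).1, opcomp i (smv x).2 (smv y).2).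

Definition cP m p n q i (x : PT m p) (y : PT n q) : PT (m + n).-1 (p + q) :=
  match excluded_middle_informative (Q _ _ (cpair i x y)) with
  | left h => SubM (introT (asbP _) h)
  | right _ => 0 end.

Lemma cP_val m p n q i (x : PT m p) (y : PT n q) :
  Q _ _ (cpair i x y) -> smv (cP i x y) = cpair i x y.
Proof. by rewrite /cP; case: excluded_middle_informative. Qed.

Lemma zl m p n q i (y : opc B n q) : (i < m)%N -> opcomp i (0 : opc B m p) y = 0.
Proof. by move=> hi; case: (lin_facts (fun a x1 x2 => @cl_lin _ _ hB m p n q i y hi a x1 x2)). Qed.
Lemma zr m p n q i (x : opc B m p) : (i < m)%N -> opcomp i x (0 : opc B n q) = 0.
Proof. by move=> hi; case: (lin_facts (fun a x1 x2 => @cr_lin _ _ hB m p n q i x hi a x1 x2)). Qed.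

Lemma QC m p n q i (x : PT m p) (y : PT n q) : (i < m)%N -> Q _ _ (cpair i x y).
Proof.
move=> hi e.
have hx := elimT (asbP _) (smP x); have hy := elimT (asbP _) (smP y).
have [hp|hp] := ltrP p 0.
  rewrite /cpair (op_neg hB (smv x).1 hp) (op_neg hB (smv x).2 hp) !zl //.
  by exists 0; rewrite subrr (d0 hB) ocast0.
have [hq|hq] := ltrP q 0.
  rewrite /cpair (op_neg hB (smv y).1 hq) (op_neg hB (smv y).2 hq) !zr //.
  by exists 0; rewrite subrr (d0 hB) ocast0.
have epq : p + q = 0 by rewrite -e.
have p0 : p = 0.
  by apply/eqP; rewrite eq_le hp andbT -epq lerDl.
subst p; have q0 : q = 0 by rewrite -epq add0r.
subst q.
have [w hw] := hx erefl; have [w' hw'] := hy erefl.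
have := @comp_bd _ _ hB m n i _ _ _ _ hi (ex_intro _ w hw) (ex_intro _ w' hw').
by move=> [w'' hw'']; exists w''; rewrite ocast_id.
Qed.

Lemma cP_val' m p n q i (x : PT m p) (y : PT n q) : (i < m)%N -> smv (cP i x y) = cpair i x y.
Proof. by move=> hi; apply: cP_val; apply: QC. Qed.

Lemma Qu : Q 1 0 (opunit B, opunit B).
Proof. by move=> e; exists 0; rewrite ocast_id /= subrr (d0 hB). Qed.
Definition uP : PT 1 0 := SubM (introT (asbP _) Qu).

Definition PP : dgop K := @DGOp K PT dP cP uP.

Lemma smv_ocast m m' k k' (e1 : m = m') (e2 : k = k') (z : opc PP m k) :
  smv (ocast e1 e2 z) = (ocast e1 e2 (smv z).1, ocast e1 e2 (smv z).2).
Proof. by case: m' / e1; case: k' / e2; case: (smv z). Qed.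

Lemma smvPD n k (x y : opc PP n k) : smv (x + y) = smv x + smv y. Proof. by []. Qed.
Lemma smvPZ n k a (x : opc PP n k) : smv (a *: x) = a *: smv x. Proof. by []. Qed.

Lemma heq_pair m k m' k' (z : opc PP m k) (z' : opc PP m' k') :
  heq (smv z).1 (smv z').1 -> heq (smv z).2 (smv z').2 -> heq z z'.
Proof.
move=> [e1 [e2 h1]] [e1' [e2' h2]].
rewrite (eq_irrelevance e1' e1) (eq_irrelevance e2' e2) in h2.
exists e1, e2; apply: smv_inj => /=; rewrite smv_ocast h1 h2.
by case: (smv z').
Qed.


Lemma opB : is_operad B. Proof. exact: hB. Qed.
Definition hBs := hB.

Lemma PP_op : is_operad PP.
Proof.
have [_ [_ [_ [_ [_ [_ [SA [PA [U1 U2]]]]]]]]] := hB.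
split.
  move=> n k z hk; apply: smv_inj => /=.
  by rewrite [smv z]surjective_pairing (op_neg hB (smv z).1 hk) (op_neg hB (smv z).2 hk).
split.
  by move=> n k a x y; apply: smv_inj => /=; rewrite !(d_lin hB).
split.
  by move=> n k x; apply: smv_inj => /=; rewrite !(dd hB).
split.
  move=> m p n q i a x x' y hi; apply: smv_inj => /=.
  rewrite !cP_val' // /cpair /=.
  by rewrite !(cl_lin hB _ hi).
split.
  move=> m p n q i a x y y' hi; apply: smv_inj => /=.
  by rewrite !cP_val' // /cpair /= !(cr_lin hB _ hi).
split.
  move=> m p n q i x y hi; apply: smv_inj.
  rewrite [LHS]/= cP_val' // smvPD smvPZ !smv_ocast !cP_val' // /cpair /=.
  by rewrite !(leib hB _ _ hi).
split.
  move=> l p m q n r i j x y z hi hj.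
  have h1 : (i + j < (l + m).-1)%N by lia.
  apply: heq_pair; rewrite !cP_val' // /cpair /= !cP_val' //; exact: SA.
split.
  move=> l p m q n r i k x y z hi hk.
  have h1 : ((k + m).-1 < (l + m).-1)%N by lia.
  have h2 : (i < (l + n).-1)%N by lia.
  have h3 : (i < l)%N by lia.
  apply: heq_pair; rewrite smvPZ !cP_val' // /cpair /= !cP_val' //; exact: PA.
split.
  move=> n q y; apply: heq_pair; rewrite cP_val' //= ; exact: U1.
move=> m p i x hi; apply: heq_pair; rewrite cP_val' //=; exact: U2.
Qed.


Lemma smvPB n k (x y : opc PP n k) : smv (x - y) = smv x - smv y. Proof. by []. Qed.
Lemma pairB (V W : zmodType) (a b : V) (c d : W) : (a, c) - (b, d) = (a - b, c - d).
Proof. by []. Qed.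
Lemma dN n k (x : opc B n k) : opd (- x) = - opd x.
Proof. by rewrite -scaleN1r (dZ hB) scaleN1r. Qed.

Lemma Qs n k (x : opc B n k) : Q n k (x, x).
Proof. move=> e; exists 0; rewrite (d0 hB) ocast0 /=; exact: subrr. Qed.
Definition sP : ohom B PP := fun n k x => SubM (introT (asbP _) (Qs x)).
Definition pr0 : ohom PP B := fun n k z => (smv z).1.
Definition pr1 : ohom PP B := fun n k z => (smv z).2.

Lemma sP_mor : is_morphism sP.
Proof.
split; first by move=> n k a x y; apply: smv_inj.
split; first by move=> n k x; apply: smv_inj.
split; last by apply: smv_inj.
by move=> m p n q i x y hi; apply: smv_inj; rewrite cP_val'.
Qed.
Lemma pr0_mor : is_morphism pr0.
Proof.
split=> //; split=> //; split=> //.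
by move=> m p n q i x y hi; rewrite /pr0 cP_val'.
Qed.
Lemma pr1_mor : is_morphism pr1.
Proof.
split=> //; split=> //; split=> //.
by move=> m p n q i x y hi; rewrite /pr1 cP_val'.
Qed.

Lemma sP_qi : acyc B -> quasi_iso sP.
Proof.
move=> hAc n k; split.
  move=> z w hz hw; exists (smv w).1; exact: (congr1 (fun t => (smv t).1) hw).
move=> z' hz'.
have h1 : opd (smv z').1 = 0 := congr1 (fun t => (smv t).1) hz'.
have h2 : opd (smv z').2 = 0 := congr1 (fun t => (smv t).2) hz'.
have [hk|hk] := ltrP (k - 1) 0.
  exists 0, 0; split; first exact: (d0 hB).
  rewrite (op_neg PP_op z' hk) subr0; apply: smv_inj => /=.
  by rewrite !(d0 hB).
have [ek|ek] := eqVneq k 1.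
  subst k; have [c hc] := elimT (asbP _) (smP z') erefl.
  have {}hc : (smv z').1 - (smv z').2 = opd c by rewrite hc ocast_id.
  have hk1 : (1 : int) != 0 by [].
  exists (smv z').2, (SubM (introT (asbP _) (@Qfree n 1 (- c, 0) hk1))); split => //.
  apply: smv_inj; rewrite smvPB [smv z']surjective_pairing pairB /=.
  congr pair; first by rewrite dN -hc opprB.
  rewrite (d0 hB); exact: subrr.
have hk2 : 2 <= k by lia.
have hk0 : k != 0 by lia.
have [a ha] := hAc n k hk2 _ h1; have [b hb] := hAc n k hk2 _ h2.
exists 0, (SubM (introT (asbP _) (@Qfree n k (- a, - b) hk0))); split; first exact: (d0 hB).
apply: smv_inj; rewrite smvPB [smv z']surjective_pairing pairB /=.
by rewrite !dN -ha -hb !sub0r.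
Qed.

Lemma pr_fib n k : 1 <= k -> forall y0 y1 : opc B n k,
  exists x, pr0 x = y0 /\ pr1 x = y1.
Proof.
move=> hk y0 y1; have hk0 : k != 0 by lia.
by exists (SubM (introT (asbP _) (@Qfree n k (y0, y1) hk0))).
Qed.

Lemma homot (B0 : dgop K) (F G : ohom B0 B) : acyc B ->
  is_morphism F -> is_morphism G -> (forall n (x : opc B0 n 0), bd (F n 0 x - G n 0 x)) ->
  homotopic F G.
Proof.
move=> hAc hF hG hFG.
have QH : forall n k (x : opc B0 n k), Q n k (F n k x, G n k x).
  move=> n k x e; move: x; case: k / e => x.
  have [w hw] := hFG n x; exists w; exact: hw.
pose Hm : ohom B0 PP := fun n k x => SubM (introT (asbP _) (QH n k x)).
exists PP, sP, pr0, pr1, Hm.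
split; first by split; [exact: PP_op | exact: sP_mor | exact: pr0_mor | exact: pr1_mor | exact: sP_qi].
split; first by [].
split; first exact: pr_fib.
split; last by [].
split.
  move=> n k a x y; apply: smv_inj => /=; by rewrite (mlin hF) (mlin hG).
split.
  move=> n k x; apply: smv_inj => /=; by rewrite (md hF) (md hG).
split; last by apply: smv_inj => /=; rewrite (mu hF) (mu hG).
move=> m p n q i x y hi; apply: smv_inj; rewrite cP_val' // /cpair /=.
by rewrite (mc hF) // (mc hG).
Qed.

End Path.

Section Main.
Variable K : fieldType.

Lemma comp_scal (O : dgop K) (hO : is_operad O) m p n q i c1 c2 (x : opc O m p) (y : opc O n q) :
  (i < m)%N -> opcomp i (c1 *: x) (c2 *: y) = (c1 * c2) *: opcomp i x y.
Proof.
move=> hi.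
case: (lin_facts (fun a x1 x2 => @cl_lin _ _ hO m p n q i (c2 *: y) hi a x1 x2)) => _ _ Lz _.
case: (lin_facts (fun a x1 x2 => @cr_lin _ _ hO m p n q i x hi a x1 x2)) => _ _ Rz _.
by rewrite Lz Rz scalerA.
Qed.

Lemma oscale_mor (O P : dgop K) (hP : is_operad P) (f : ohom O P) (hf : is_morphism f)
  a (ha : a != 0) : is_morphism (oscale a f).
Proof.
split.
  move=> n k b x y; rewrite /oscale (mlin hf) scalerDr !scalerA; congr (_ *: _ + _).
  exact: mulrC.
split.
  by move=> n k x; rewrite /oscale (md hf) (dZ hP).
split.
  move=> m p n q i x y hi; rewrite /oscale (mc hf) // (comp_scal hP _ _ _ _ hi) -expfzDr //.
  congr (a ^ _ *: _); lia.
by rewrite /oscale (mu hf) expr0z scale1r.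
Qed.

Lemma zid4 (V : zmodType) (a b c : V) : (a - b) - (a - c) = c - b.
Proof. by rewrite -zid1. Qed.

Lemma coeff (O P : dgop K) (hO : is_operad O) (hP : is_operad P) e m e' m'
  (IO : Inv' e m) (IP : @Inv' K P e' m') (phi : ohom O P) (hphi : is_morphism phi) :
  exists beta : K, beta != 0 /\
    forall n, bd (phi n 0 (Mseq e m n) - beta ^ (n%:Z - 1) *: Mseq e' m' n).
Proof.
case: IO => AO BO CO DO; case: IP => AP BP CP DP.
have [beta hb] := DP 2 (phi 2 0 m).
have [gam hg] := DP 0 (phi 0 0 e).
have key : forall k, bd (phi k.+2 0 (M2 m k) - beta ^+ k.+1 *: M2 m' k).
  elim=> [|k IH]; first by rewrite expr1.
  have E : beta ^+ k.+2 *: M2 m' k.+1 =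
      opcomp 0 (beta *: m') (beta ^+ k.+1 *: M2 m' k) :> opc P k.+3 0.
    by rewrite (comp_scal hP _ _ _ _ (isT : (0 < 2)%N)) -exprS.
  rewrite E /= (mc0 hphi m (M2 m k) (isT : (0 < 2)%N)).
  exact: (comp_bd hP (isT : (0 < 2)%N) hb IH).
have i02 : (0 < 2)%N by [].
have X := mbd hphi CO; rewrite (mB hphi) (mu hphi) (mc0 hphi m e i02) in X.
have Y := comp_bd hP i02 hb hg.
rewrite /= (comp_scal hP _ _ _ _ i02) in Y.
set M := opcomp 0 m' e' in Y CP; set u := opunit P in X CP BP.
set bg := beta * gam in Y.
have S1 : bd (bg *: M - u) by rewrite -(zid4 (opcomp 0 (phi 2 0 m) (phi 0 0 e))); apply: (bdB hP); [exact: X | exact: Y].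
have S3 : bd (bg *: u - u).
  rewrite -(zid4 (bg *: M)) -scalerBr; apply: (bdB hP); [exact: S1 | exact: (bdZ hP _ CP)].
have hbg : bg = 1.
  case: (eqVneq bg 1) => // hne; exfalso; apply: BP.
  have h1 : bg - 1 != 0 by rewrite subr_eq0.
  have -> : u = (bg - 1)^-1 *: (bg *: u - u).
    have E : bg *: u - u = (bg - 1) *: u by rewrite scalerBl scale1r.
    by rewrite E scalerA mulVf // scale1r.
  by apply: (bdZ hP).
have hb0 : beta != 0.
  by apply/eqP => h0; move: hbg; rewrite /bg h0 mul0r => /eqP; rewrite eq_sym oner_eq0.
exists beta; split => //.
case=> [|[|k]].
- have -> : beta ^ ((0%N)%:Z - 1) = gam.
    by rewrite exprN1 -[RHS]mul1r -(mulVf hb0) -mulrA -/bg hbg mulr1.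
  exact: hg.
- rewrite (_ : beta ^ ((1%N)%:Z - 1) = 1) // scale1r /= (mu hphi) subrr; apply: (bd0 hP).
- have ek : (k.+2)%:Z - 1 = (k.+1)%:Z by lia.
  rewrite ek; exact: key.
Qed.
End Main.

Lemma lid2 (K : fieldType) (V : lmodType K) (c u v : K) (X Y M : V) : c * u = v ->
  c *: X - Y = c *: (X - u *: M) - (Y - v *: M).
Proof.
by move=> <-; rewrite scalerBr scalerA opprB !subrKA.
Qed.

Lemma linsplit (K : fieldType) (V W : lmodType K) (F G : V -> W) lam (x M : V) :
  F (x - lam *: M) = F x - lam *: F M -> G (x - lam *: M) = G x - lam *: G M ->
  F x - G x = (F (x - lam *: M) - G (x - lam *: M)) + lam *: (F M - G M).
Proof.
by move=> -> ->; rewrite scalerBr opprB addrAC !subrKA.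
Qed.

Theorem lemma2p3 (K : fieldType) (B0 B1 : dgop K)
  (hA0 : A_infinity B0) (hA1 : A_infinity B1) (hcof : cofibrant B0)
  (f : ohom B0 B1) (hf : is_morphism f) :
  (forall a : K, a != 0 -> is_morphism (oscale a f)) /\
  (forall g : ohom B0 B1, is_morphism g ->
     exists a : K, a != 0 /\ homotopic (oscale a f) g) /\
  (forall a b : K, a != 0 -> b != 0 ->
     homotopic (oscale a f) (oscale b f) -> a = b).
Proof.
case: hA0 => hO0 hz0; case: hA1 => hO1 hz1.
have [e0 [m0 I0]] : exists e m, @Inv' K B0 e m.
  by apply/(zz_inv hz0); exists (r1 K), (r1 K); exact: inv_assoc.
have [e1 [m1 I1]] : exists e m, @Inv' K B1 e m.
  by apply/(zz_inv hz1); exists (r1 K), (r1 K); exact: inv_assoc.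
have P1 : forall a : K, a != 0 -> is_morphism (oscale a f).
  by move=> a ha; exact: oscale_mor.
have [bf [hbf Cf]] := coeff hO0 hO1 I0 I1 hf.
split => //; split.
  move=> g hg.
  have [bg [hbg Cg]] := coeff hO0 hO1 I0 I1 hg.
  set a := bg / bf.
  have ha : a != 0 by rewrite mulf_neq0 // invr_eq0.
  exists a; split => //.
  case: I1 => AC1 _ _ _.
  apply: (homot hO1 AC1 (P1 a ha) hg).
  move=> n x.
  case: I0 => _ _ _ D0; have [lam hl] := D0 n x.
  have hF := P1 a ha.
  rewrite (linsplit (F := @oscale _ _ _ a f n 0) (G := g n 0) (lam := lam) (x := x) (M := Mseq e0 m0 n)); last first.
  - by rewrite (mB hg) (mZ hg).
  - by rewrite (mB hF) (mZ hF).
  apply: (bdD hO1); first by apply: (bdB hO1); [exact: (mbd hF hl) | exact: (mbd hg hl)].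
  apply: (bdZ hO1).
  rewrite /oscale (@lid2 _ _ (a ^ (n%:Z - 1)) (bf ^ (n%:Z - 1)) (bg ^ (n%:Z - 1)) _ _ (Mseq e1 m1 n)).
    apply: (bdB hO1); [exact: (bdZ hO1 _ (Cf n)) | exact: (Cg n)].
  by rewrite -exprzMl ?unitfE // /a divfK.
move=> a b ha hb [P [s [p0 [p1 [H [[hP hs hp0 hp1 hsq] [hsp [_ [hH hHp]]]]]]]]].
case: (eqVneq a b) => // hab; exfalso.
case: I1 => _ B1' C1 _.
have i02 : (0 < 2)%N by [].
have [z [w [_ hzw]]] := (hsq 2 1).2 (H 2 0 m0) (d_deg0 hP _).
have hza : bd (z - oscale a f m0).
  have E0 : p0 2 0 (s 2 0 z - H 2 0 m0) = p0 2 0 (opd w) := congr1 _ hzw.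
  rewrite (mB hp0) (proj1 (hsp 2 0 z)) (proj1 (hHp 2 0 m0)) in E0.
  by exists (p0 2 1 w); rewrite E0; exact: (md hp0 w).
have hzb : bd (z - oscale b f m0).
  have E0 : p1 2 0 (s 2 0 z - H 2 0 m0) = p1 2 0 (opd w) := congr1 _ hzw.
  rewrite (mB hp1) (proj2 (hsp 2 0 z)) (proj2 (hHp 2 0 m0)) in E0.
  by exists (p1 2 1 w); rewrite E0; exact: (md hp1 w).
have hd : bd (oscale a f m0 - oscale b f m0).
  rewrite -(zid4 z); by apply: (bdB hO1).
rewrite /oscale (_ : a ^ ((2%N)%:Z - 1) = a) // (_ : b ^ ((2%N)%:Z - 1) = b) // -scalerBl in hd.
have Cf2 := Cf 2; rewrite (_ : bf ^ ((2%N)%:Z - 1) = bf) //= in Cf2.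
have hab0 : (a - b) * bf != 0 by rewrite mulf_neq0 // subr_eq0.
have hm1 : bd m1.
  have -> : m1 = ((a - b) * bf)^-1 *: ((a - b) *: f 2 0 m0 - (a - b) *: (f 2 0 m0 - bf *: m1)).
    by rewrite -scalerBr subKr !scalerA -?mulrA mulVf // scale1r.
  apply: (bdZ hO1); apply: (bdB hO1); [by [] | by apply: (bdZ hO1)].
have hme : bd (opcomp 0 m1 e1 - opcomp 0 (0 : opc B1 2 0) e1 : opc B1 1 0).
  apply: (comp_bd hO1 i02); first by rewrite subr0.
  rewrite subrr; exact: (bd0 hO1).
rewrite (@zl _ _ hO1 2 0 0 0 0 e1 i02) subr0 in hme.
apply: B1'; rewrite -(subKr (opcomp 0 m1 e1 : opc B1 1 0) (opunit B1)).
by apply: (bdB hO1).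
Qed.
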